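(* Let $n>k\ge 1$ and $d\ge 2$ be integers with $J:=n-k-d+2\ge 1$. Consider a bipartite graph $\mathcal{T}$ with $n$ variable nodes (VNs) and $n-k$ check nodes (CNs). (a) (Necessity.) Let $\mathbf{H}\in\mathbb{F}_q^{(n-k)\times n}$ have full row rank and let $\mathcal{T}$ be its Tanner graph. If the code $\mathcal{C}=\{\mathbf{y}\in\mathbb{F}_q^n:\mathbf{y}\mathbf{H}^T=\mathbf{0}\}$ (of dimension $k$) has minimum distance at least $d$, then for every $\gamma\in[J,n-k]$, every set of $\gamma$ CNs of $\mathcal{T}$ is adjacent to at least $\gamma+k$ VNs. (b) (Sufficiency.) Conversely, if for every $\gamma\in[J,n-k]$ every set of $\gamma$ CNs of $\mathcal{T}$ is adjacent to at least $\gamma+k$ VNs, then for all sufficiently large $q$ there exists a matrix $\mathbf{H}\in\mathbb{F}_q^{(n-k)\times n}$ whose Tanner graph is $\mathcal{T}$ such that the code $\{\mathbf{y}\in\mathbb{F}_q^n:\mathbf{y}\mathbf{H}^T=\mathbf{0}\}$ has minimum distance at least $d$.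
   Context: The Tanner graph of a matrix $\mathbf{H}\in\mathbb{F}_q^{(n-k)\times n}$ is the bipartite graph with variable nodes $1,\dots,n$ (columns) and check nodes $1,\dots,n-k$ (rows), where VN $i$ is adjacent to CN $j$ iff $H_{j,i}\neq 0$. A set of CNs is said to cover (be adjacent to) the set of VNs adjacent to at least one of its members. $[a,b]=\{a,\dots,b\}$. *)

(* Defs.v *)
From HB Require Import structures.
From mathcomp Require Import all_boot all_order all_algebra all_field.
Set Implicit Arguments. Unset Strict Implicit. Unset Printing Implicit Defensive.
Import GRing.Theory.
Local Open Scope ring_scope.

(* A bipartite graph with m check nodes and n variable nodes:
   T j i = true iff CN j is adjacent to VN i. *)
Definition bigraph (m n : nat) := 'I_m -> 'I_n -> bool.

Definition is_tanner (F : fieldType) (m n : nat) (H : 'M[F]_(m, n))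
  (T : bigraph m n) : Prop :=
  forall (j : 'I_m) (i : 'I_n), T j i = (H j i != 0).

Definition nbhd (m n : nat) (T : bigraph m n) (S : {set 'I_m}) : {set 'I_n} :=
  [set i | [exists j in S, T j i]].

Definition wt (F : fieldType) (n : nat) (y : 'rV[F]_n) : nat :=
  #|[set i : 'I_n | y 0 i != 0]|.

Definition min_dist_ge (F : fieldType) (m n : nat) (H : 'M[F]_(m, n)) (d : nat)
  : Prop :=
  forall y : 'rV[F]_n, y *m H^T = 0 -> y != 0 -> (d <= wt y)%N.

Definition cover_cond (m n : nat) (T : bigraph m n) (k J : nat) : Prop :=
  forall S : {set 'I_m}, (J <= #|S| <= m)%N -> (#|S| + k <= #|nbhd T S|)%N.

(* Main.v *)
Require Import Defs.
From HB Require Import structures.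
From mathcomp Require Import all_boot all_order all_algebra all_field.
From mathcomp Require Import zify.
Set Implicit Arguments. Unset Strict Implicit. Unset Printing Implicit Defensive.

Definition colnb (m n : nat) (T : bigraph m n) (R : {set 'I_m}) (B : {set 'I_n})
  : {set 'I_m} := [set j in R | [exists i in B, T j i]].

Lemma colnbU m n (T : bigraph m n) R B C :
  colnb T R (B :|: C) = colnb T R B :|: colnb T R C.
Proof.
apply/setP=> j; rewrite !inE; case: (j \in R) => //=.
apply/existsP/orP.
  by case=> i /andP[]; rewrite inE => /orP[] hi hT; [left|right]; apply/existsP; exists i; rewrite hi.
by case=> /existsP[i /andP[hi hT]]; exists i; rewrite inE hi ?orbT.
Qed.

Lemma colnbD m n (T : bigraph m n) R Y B :
  colnb T (R :\: Y) B = colnb T R B :\: Y.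
Proof. by apply/setP=> j; rewrite !inE andbA [X in X && _]andbC. Qed.

Lemma colnb_sub m n (T : bigraph m n) R B : colnb T R B \subset R.
Proof. by apply/subsetP=> j; rewrite inE => /andP[]. Qed.

Lemma subUset_ok (T : finType) (C B A D : {set T}) :
  C \subset A :\: D -> B \subset A -> C :|: B \subset A.
Proof. by move=> h1 h2; rewrite subUset h2 (subset_trans h1) // subsetDl. Qed.

Lemma hall m n (T : bigraph m n) (j0 : 'I_m) :
  forall (A : {set 'I_n}) (R : {set 'I_m}),
  (forall B : {set 'I_n}, B \subset A -> #|B| <= #|colnb T R B|) ->
  exists f : 'I_n -> 'I_m, {in A &, injective f} /\
    (forall i, i \in A -> (f i \in R) && T (f i) i).
Proof.
move=> A0; elim: {A0}_.+1 {-2}A0 (ltnSn #|A0|) => // N IH A hA R hH.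
have [->|Ane] := eqVneq A set0.
  by exists (fun _ => j0); split=> [i|i]; rewrite inE.
case: (boolP [exists B : {set 'I_n}, [&& B \proper A, B != set0 & #|colnb T R B| == #|B|]]).
  case/existsP=> B /and3P[BA Bne /eqP tight].
  have BsA := proper_sub BA.
  have [f1 [inj1 h1]] : exists f : 'I_n -> 'I_m, {in B &, injective f} /\
      (forall i, i \in B -> (f i \in R) && T (f i) i).
    apply: IH; first by apply: leq_trans (proper_card BA) _; rewrite -ltnS.
    by move=> C CB; apply: hH; apply: subset_trans BsA.
  set Y := colnb T R B.
  have [f2 [inj2 h2]] : exists f : 'I_n -> 'I_m, {in A :\: B &, injective f} /\
      (forall i, i \in A :\: B -> (f i \in R :\: Y) && T (f i) i).
    apply: IH.
      have : #|B| > 0 by rewrite card_gt0.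
      have : #|A| > 0 by rewrite card_gt0.
      have := cardsD A B; rewrite (setIidPr BsA); move: hA; lia.
    move=> C CAB.
    have CB0 : C :&: B = set0.
      apply/setP=> i; rewrite !inE; apply/andP=> -[iC iB].
      by move/subsetP: CAB => /(_ i iC); rewrite inE iB.
    have h := hH (C :|: B) (subUset_ok CAB BsA).
    rewrite colnbU in h.
    rewrite colnbD.
    have := cardsU (colnb T R C) Y; have := cardsD (colnb T R C) Y.
    have := cardsU C B; rewrite CB0 cards0.
    have := subset_leq_card (subsetIl (colnb T R C) Y).
    move: h; rewrite /Y tight; lia.
  exists (fun i => if i \in B then f1 i else f2 i); split.
    move=> i i' iA i'A /=.
    case: (boolP (i \in B)) => iB; case: (boolP (i' \in B)) => i'B.
    - exact: inj1.
    - move=> e; have hi' : i' \in A :\: B by rewrite inE i'B i'A.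
      have := h2 i' hi'.
      rewrite -e; case/andP; rewrite inE => /andP[/negP nY _] _; exfalso; apply: nY.
      by case/andP: (h1 i iB) => hR hT; rewrite inE hR; apply/existsP; exists i; rewrite iB.
    - move=> e; have hi : i \in A :\: B by rewrite inE iB iA.
      have := h2 i hi.
      rewrite e; case/andP; rewrite inE => /andP[/negP nY _] _; exfalso; apply: nY.
      by case/andP: (h1 i' i'B) => hR hT; rewrite inE hR; apply/existsP; exists i'; rewrite i'B.
    - by apply: inj2; rewrite inE ?iB ?i'B.
  move=> i iA; case: ifP => iB; first exact: h1.
  have hi : i \in A :\: B by rewrite inE iB iA.
  by case/andP: (h2 i hi); rewrite inE => /andP[_ ->] ->.
move=> nt.
have /set0Pn [i0 i0A] := Ane.
have hc : 0 < #|colnb T R [set i0]|.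
  by have := hH [set i0]; rewrite sub1set i0A cards1 => /(_ isT).
have /card_gt0P [j jN] := hc.
have [jR hj] : j \in R /\ T j i0.
  by move: jN; rewrite inE => /andP[jR /existsP[i /andP[]]]; rewrite inE => /eqP -> hT.
have [f' [inj' h']] : exists f : 'I_n -> 'I_m, {in A :\ i0 &, injective f} /\
    (forall i, i \in A :\ i0 -> (f i \in R :\ j) && T (f i) i).
  apply: IH.
    by have := cardsD1 i0 A; rewrite i0A; move: hA; lia.
  move=> C CA.
  have [->|Cne] := eqVneq C set0; first by rewrite cards0.
  have CsA : C \subset A by apply: subset_trans CA (subsetDl _ _).
  have i0C : i0 \notin C.
    by apply/negP=> /(subsetP CA); rewrite !inE eqxx.
  have Cp : C \proper A.
    by rewrite properE CsA; apply/negP=> /subsetP/(_ i0 i0A); rewrite (negbTE i0C).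
  move/existsPn: nt => /(_ C); rewrite Cp Cne /= => neq.
  have := hH C CsA; rewrite colnbD.
  have := cardsD1 j (colnb T R C); move: neq; case: (j \in _) => /=; lia.
exists (fun i => if i == i0 then j else f' i); split.
  move=> i i' iA i'A /=.
  case: (eqVneq i i0) => [->|ni]; case: (eqVneq i' i0) => [->|ni'] //.
  - move=> e; have hi' : i' \in A :\ i0 by rewrite !inE ni' i'A.
    by move: (h' i' hi'); rewrite -e !inE eqxx.
  - move=> e; have hi : i \in A :\ i0 by rewrite !inE ni iA.
    by move: (h' i hi); rewrite e !inE eqxx.
  - by apply: inj'; rewrite !inE ?ni ?ni' ?iA ?i'A.
move=> i iA; case: (eqVneq i i0) => [->|ni]; first by rewrite jR hj.
have hi : i \in A :\ i0 by rewrite !inE ni iA.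
by case/andP: (h' i hi); rewrite !inE => /andP[_ ->] ->.
Qed.

Import GRing.Theory.
Local Open Scope ring_scope.

Lemma partA (m n k d : nat) (F : fieldType) (H : 'M[F]_(m,n)) (T : bigraph m n) :
  m = (n - k)%N -> (k < n)%N -> (1 <= m.+2 - d)%N -> is_tanner H T ->
  min_dist_ge H d -> cover_cond T k (m.+2 - d).
Proof.
move=> hm hkn hJ tan md S /andP[hS1 hS2].
rewrite leqNgt; apply/negP => hlt.
set N := nbhd T S.
set u := (m - #|S| + 1)%N.
have hu : (u <= #|~: N|)%N.
  have := cardsC N; rewrite card_ord; move: hlt hm hkn hS2; rewrite /u /N; lia.
pose g : 'I_u -> 'I_n := fun l => enum_val (widen_ord hu l).
have ginj : injective g by move=> l l' /enum_val_inj /(congr1 val) /= /val_inj.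
have gN : forall l, g l \in ~: N := fun l => enum_valP _.
pose B := \matrix_(l < u, r < #|~: S|) H (enum_val r) (g l).
have hrk : (\rank B < u)%N.
  apply: leq_ltn_trans (rank_leq_col B) _.
  by have := cardsC S; rewrite card_ord; move: hS2; rewrite /u; lia.
have kB : kermx B != 0.
  by rewrite -mxrank_eq0 mxrank_ker; move: hrk; lia.
have [l0 hl0] : exists l0, row l0 (kermx B) != 0.
  apply/existsP; apply: contraR kB => /existsPn h.
  apply/eqP/row_matrixP => l; rewrite row0; exact/eqP/negPn/h.
set z := row l0 (kermx B).
have zB : z *m B = 0 by apply/sub_kermxP; exact: row_sub.
pose y : 'rV[F]_n := \row_i \sum_l z 0 l * (g l == i)%:R.
have ysum : forall c : 'I_n -> F, \sum_i y 0 i * c i = \sum_l z 0 l * c (g l).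
  move=> c; under eq_bigr do rewrite mxE big_distrl /=.
  rewrite exchange_big /=; apply: eq_bigr => l _.
  rewrite (bigD1 (g l)) //= eqxx mulr1 big1 ?addr0 // => i /negbTE.
  by rewrite eq_sym => ->; rewrite mulr0 mul0r.
have yH : y *m H^T = 0.
  apply/rowP => j.
  have -> : (y *m H^T) 0 j = \sum_i y 0 i * H j i.
    by rewrite mxE; apply: eq_bigr => i _; rewrite [H^T _ _]mxE.
  rewrite ysum mxE.
  case: (boolP (j \in S)) => jS.
    apply: big1 => l _.
    have := gN l; rewrite !inE => /existsPn/(_ j); rewrite jS /= tan negbK => /eqP ->.
    by rewrite mulr0.
  have jS' : j \in ~: S by rewrite inE jS.
  have := congr1 (fun M : 'rV[F]_#|~: S| => M 0 (enum_rank_in jS' j)) zB; rewrite !mxE => h; rewrite -[X in _ = X]h.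
  apply: eq_bigr => l _; rewrite [B _ _]mxE; congr (_ * H _ _); symmetry; exact: (enum_rankK_in jS' jS').
have y0 : y != 0.
  have [l hl] : exists l, z 0 l != 0.
    apply/existsP; apply: contraR hl0 => /existsPn h.
    by apply/eqP/rowP => l; rewrite [RHS]mxE; exact/eqP/negPn/h.
  apply/negP => /eqP y0'.
  have := congr1 (fun M : 'rV[F]_n => M 0 (g l)) y0'.
  rewrite !mxE (bigD1 l) //= eqxx mulr1 big1 ?addr0.
    by move/eqP; rewrite (negbTE hl).
  by move=> l' hl'; rewrite (inj_eq ginj) (negbTE hl') mulr0.
have := md y yH y0.
have : (wt y <= u)%N.
  apply: leq_trans (_ : #|g @: [set: 'I_u]| <= u)%N.
    apply: subset_leq_card; apply/subsetP=> i; rewrite inE => hi.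
    case: (pickP (fun l => g l == i)) => [l /eqP <-|none].
      by apply/imsetP; exists l; rewrite ?inE.
    by move: hi; rewrite mxE big1 ?eqxx // => l _; rewrite none mulr0.
  by apply: leq_trans (leq_imset_card _ _) _; rewrite cardsT card_ord.
move: hS1 hJ; rewrite /u; lia.
Qed.

Definition subM (F : fieldType) m n (H : 'M[F]_(m,n)) a (f : 'I_a -> 'I_m)
  (g : 'I_a -> 'I_n) : 'M[F]_a := \matrix_(i, j) H (f i) (g j).

Definition Inv (F : fieldType) m n (H : 'M[F]_(m,n)) (s : seq ('I_m * 'I_n)) :=
  forall a (f : 'I_a -> 'I_m) (g : 'I_a -> 'I_n), injective f -> injective g ->
  (forall i, (f i, g i) \in s) -> \det (subM H f g) != 0.

Lemma det_upd (F : fieldType) a (M : 'M[F]_a) i j x :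
  \det (M + x *: delta_mx i j) = \det M + x * cofactor M i j.
Proof.
rewrite (expand_det_row _ i) (expand_det_row M i).
have cof : forall j', cofactor (M + x *: delta_mx i j) i j' = cofactor M i j'.
  move=> j'; rewrite /cofactor; congr (_ * \det _); apply/matrixP => r c.
  by rewrite !mxE eq_sym (negbTE (neq_lift i r)) /= mulr0 addr0.
under eq_bigr do rewrite cof !mxE eqxx /= mulrDl.
rewrite big_split /=; congr (_ + _).
rewrite (bigD1 j) //= eqxx mulr1 big1 ?addr0 // => j' /negbTE.
by rewrite eq_sym => ->; rewrite mulr0 mul0r.
Qed.

Definition badv (F : fieldType) m n (H : 'M[F]_(m,n)) (p : 'I_m * 'I_n) a
  (f : 'I_a -> 'I_m) (g : 'I_a -> 'I_n) : F :=
  if [pick kl : 'I_a * 'I_a | (f kl.1 == p.1) && (g kl.2 == p.2)] is Some kl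
  then - \det (subM H f g) / cofactor (subM H f g) kl.1 kl.2 else 0.

Lemma badv_ext (F : fieldType) m n (H : 'M[F]_(m,n)) p a (f f' : 'I_a -> 'I_m)
  (g g' : 'I_a -> 'I_n) : f =1 f' -> g =1 g' -> badv H p f g = badv H p f' g'.
Proof.
move=> ef eg; rewrite /badv.
have -> : subM H f g = subM H f' g' by apply/matrixP => i j; rewrite !mxE ef eg.
rewrite (@eq_pick _ _ (fun kl : 'I_a * 'I_a => (f' kl.1 == p.1) && (g' kl.2 == p.2))) //.
by move=> kl; rewrite ef eg.
Qed.

Lemma step (F : fieldType) m n (H : 'M[F]_(m,n)) s pj pi x :
  Inv H s -> (forall a (f : 'I_a -> 'I_m) (g : 'I_a -> 'I_n), injective f -> injective g -> x != badv H (pj, pi) f g) ->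
  Inv (H + x *: delta_mx pj pi) ((pj, pi) :: s).
Proof.
move=> hI hx a f g fi gi hs.
have := hx a f g fi gi; rewrite /badv.
case: pickP => [[k l] /= /andP[/eqP ek /eqP el] | none] hxb.
  have eM : subM (H + x *: delta_mx pj pi) f g = subM H f g + x *: delta_mx k l.
    by apply/matrixP => r c; rewrite !mxE -ek -el (inj_eq fi) (inj_eq gi).
  rewrite eM det_upd.
  set M := subM H f g.
  have alt : (\det M != 0) || (cofactor M k l != 0).
    case: (eqVneq k l) => [<-|nkl].
      apply/orP; right; rewrite /cofactor mulf_neq0 //.
        by rewrite expf_neq0 // oppr_eq0 oner_eq0.
      have -> : row' k (col' k M) = subM H (f \o lift k) (g \o lift k).
        by apply/matrixP => r c; rewrite !mxE.
      apply: hI.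
      - exact: inj_comp fi (@lift_inj _ k).
      - exact: inj_comp gi (@lift_inj _ k).
      move=> r /=; have := hs (lift k r); rewrite in_cons => /orP[/eqP e|//].
      case: e => e1 _; move: e1; rewrite -ek => /fi /eqP.
      by rewrite eq_sym (negbTE (neq_lift _ _)).
    apply/orP; left; apply: hI => // r.
    have := hs r; rewrite in_cons => /orP[/eqP e|//].
    case: e => e1 e2; move: e1 e2; rewrite -ek -el => /fi e1 /gi e2.
    by move: nkl; rewrite -e1 -e2 eqxx.
  apply/eqP => h0.
  have [c0|cn] := eqVneq (cofactor M k l) 0.
    rewrite c0 mulr0 addr0 in h0.
    by case/orP: alt; rewrite ?h0 ?c0 eqxx.
  have e : x * cofactor M k l = - \det M.
    by rewrite -[x * _](addKr (\det M)) h0 addr0.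
  by move: hxb; rewrite -e mulfK // eqxx.
have eM : subM (H + x *: delta_mx pj pi) f g = subM H f g.
  apply/matrixP => r c; rewrite !mxE.
  by have := none (r, c); rewrite /= => ->; rewrite mulr0 addr0.
rewrite eM; apply: hI => // r; have := hs r; rewrite in_cons => /orP[/eqP e|//].
by case: e => e1 e2; have := none (r, r); rewrite /= e1 e2 !eqxx.
Qed.

Definition Dt m n : finType := {a : 'I_m.+1 & ({ffun 'I_a -> 'I_m} * {ffun 'I_a -> 'I_n})%type}.

Lemma build (F : finFieldType) m n : (#|Dt m n| + 2 <= #|F|)%N ->
  forall s : seq ('I_m * 'I_n), exists H : 'M[F]_(m,n),
    (forall j i, (H j i != 0) = ((j,i) \in s)) /\ Inv H s.
Proof.
move=> hF; elim=> [|p s [H [hsup hI]]].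
  exists 0; split => [j i|]; first by rewrite mxE eqxx.
  move=> [|a] f g _ _ hs; first by rewrite det_mx00 oner_eq0.
  by have := hs ord0.
case: (boolP (p \in s)) => ps.
  exists H; split => [j i|a f g fi gi hs].
    by rewrite hsup in_cons; case: eqVneq => [->|_] //=; rewrite ps.
  by apply: hI => // r; have := hs r; rewrite in_cons; case: eqVneq => [->|] //.
case: p ps => pj pi ps.
pose phi (d : Dt m n) := badv H (pj, pi) (fun k => (projT2 d).1 k) (fun k => (projT2 d).2 k).
pose Bs := 0 |: (phi @: [set: Dt m n]).
have hB : (#|Bs| < #|F|)%N.
  have h1 := leq_imset_card phi [set: Dt m n]; rewrite cardsT in h1.
  rewrite cardsU1; apply: leq_trans hF; rewrite addn2 ltnS addnC -addn1.
  exact: leq_add h1 (leq_b1 _).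
have [x xB] : exists x, x \notin Bs.
  have : (0 < #|~: Bs|)%N by move: hB; rewrite -(cardsC Bs) -{1}(addn0 #|Bs|) ltn_add2l.
  by case/card_gt0P => x; rewrite inE => xB; exists x.
have x0 : x != 0 by apply: contraNneq xB => ->; rewrite !inE eqxx.
have xphi : forall d, x != phi d.
  move=> d; apply: contraNneq xB => ->; rewrite !inE; apply/orP; right.
  by apply/imsetP; exists d; rewrite ?inE.
exists (H + x *: delta_mx pj pi); split.
  move=> j i; rewrite !mxE in_cons.
  case: (eqVneq (j, i) (pj, pi)) => [e|ne].
    case: e => e1 e2; subst pj pi.
    have Hji : H j i = 0 by apply/eqP; apply/negPn; rewrite hsup (negbTE ps).
    by rewrite Hji !eqxx /= mulr1 add0r x0.
  have -> : ((j == pj) && (i == pi)) = false by apply/negbTE; rewrite -xpair_eqE.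
  by rewrite mulr0 addr0 hsup.
apply: step => // a f g fi gi.
have ha : (a < m.+1)%N by rewrite ltnS; have := @leq_card _ _ f fi; rewrite !card_ord.
have <- : phi (existT _ (Ordinal ha) ([ffun k => f k], [ffun k => g k])) = badv H (pj, pi) f g.
  by rewrite /phi /=; apply: badv_ext => k; rewrite ffunE.
exact: xphi.
Qed.


Lemma partB_md (F : fieldType) m n k d (T : bigraph m n) (H : 'M[F]_(m,n)) (j0 : 'I_m) :
  m = (n - k)%N -> (k < n)%N -> cover_cond T k (m.+2 - d) ->
  (forall a (f : 'I_a -> 'I_m) (g : 'I_a -> 'I_n), injective f -> injective g ->
     (forall i, T (f i) (g i)) -> \det (subM H f g) != 0) -> min_dist_ge H d.
Proof.
move=> hm hkn hc hdet y yH y0.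
rewrite leqNgt; apply/negP => hw.
set A := [set i | y 0 i != 0].
have hallc : forall B : {set 'I_n}, B \subset A -> (#|B| <= #|colnb T setT B|)%N.
  move=> B BA.
  have hB : (#|B| < d)%N by apply: leq_ltn_trans (subset_leq_card BA) hw.
  rewrite leqNgt; apply/negP => lt.
  set Cb := colnb T setT B.
  have hS := cardsC Cb; rewrite card_ord in hS.
  have := hc (~: Cb); rewrite (_ : (_ && _) = true); last first.
    by apply/andP; split; move: hS hB lt; rewrite /Cb; lia.
  move=> /(_ isT) hcov.
  have sub : nbhd T (~: Cb) \subset ~: B.
    apply/subsetP => i; rewrite !inE => /existsP[j /andP[jS hT]]; apply/negP => iB.
    by move: jS; rewrite !inE; apply/negP; rewrite negbK; apply/existsP; exists i; rewrite iB.
  have := subset_leq_card sub; have := cardsC B; rewrite card_ord.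
  by move: hcov hS hm hkn lt; rewrite /Cb; lia.
have [f [finj fT]] := @hall _ _ T j0 A setT hallc.
pose g := fun l : 'I_#|A| => (enum_val l : 'I_n).
have ginj : injective g := @enum_val_inj _ _.
have gA : forall l, g l \in A := fun l => enum_valP l.
have fginj : injective (f \o g).
  by move=> l l' /= /(finj _ _ (gA l) (gA l')) /ginj.
have hM := hdet _ (f \o g) g fginj ginj (fun l => proj2 (andP (fT _ (gA l)))).
set M := subM H (f \o g) g.
pose z : 'rV[F]_#|A| := \row_l y 0 (g l).
have zM : z *m M^T = 0.
  apply/rowP => r; rewrite [RHS]mxE.
  have := congr1 (fun N : 'rV[F]_m => N 0 (f (g r))) yH; rewrite [RHS]mxE => h.
  rewrite -[X in _ = X]h !mxE (bigID (mem A)) /= [X in _ = _ + X]big1 ?addr0; last first.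
    by move=> i; rewrite inE negbK => /eqP ->; rewrite mul0r.
  rewrite [RHS]big_enum_val; apply: eq_bigr => l _; rewrite !mxE.
  by [].
have Mu : M^T \in unitmx by rewrite unitmx_tr unitmxE unitfE.
have z0 : z = 0 by rewrite -(mulmxK Mu z) zM mul0mx.
have [i yi] : exists i, y 0 i != 0.
  apply/existsP; apply: contraR y0 => /existsPn h.
  by apply/eqP/rowP => i; rewrite [RHS]mxE; exact/eqP/negPn/h.
have iA : i \in A by rewrite inE.
have := congr1 (fun N : 'rV[F]_#|A| => N 0 (enum_rank_in iA i)) z0.
rewrite !mxE /g (enum_rankK_in iA iA) => /eqP.
by rewrite (negbTE yi).
Qed.

Theorem lemma2 (n k d : nat) (hkn : (k < n)%N) (hk : (1 <= k)%N) (hd : (2 <= d)%N)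
  (hJ : (1 <= (n - k).+2 - d)%N) :
  (forall (F : finFieldType) (H : 'M[F]_(n - k, n)) (T : bigraph (n - k) n),
      row_free H -> is_tanner H T -> min_dist_ge H d ->
      cover_cond T k ((n - k).+2 - d))
  /\
  (forall T : bigraph (n - k) n,
      cover_cond T k ((n - k).+2 - d) ->
      exists Q : nat, forall F : finFieldType, (Q <= #|F|)%N ->
        exists H : 'M[F]_(n - k, n), is_tanner H T /\ min_dist_ge H d).
Proof.
split.
  move=> F H T _ tan md; exact: (@partA (n - k) n k d F H T erefl hkn hJ tan md).
move=> T hc.
have hm0 : (0 < n - k)%N by rewrite subn_gt0.
pose j0 : 'I_(n - k) := Ordinal hm0.
exists (#|Dt (n - k) n| + 2)%N => F hF.
have [H [hsup hI]] := @build F (n - k) n hF [seq p <- enum [set: 'I_(n - k) * 'I_n] | T p.1 p.2].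
exists H; split.
  by move=> j i; rewrite hsup mem_filter mem_enum inE andbT.
apply: (@partB_md F (n - k) n k d T H j0 erefl hkn hc).
move=> a f g fi gi hT; apply: hI => // i.
by rewrite mem_filter mem_enum inE /= hT.
Qed.
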